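(* In $Y_R(\mathfrak{so}_3)$: $$[e_{-1,0}(u),f_{0,-1}(v)]=\frac{k_{-1}^{-1}(u)k_0(u)-k_{-1}^{-1}(v)k_0(v)}{u-v}.$$
   Context: Let $e_{ij}$ ($i,j\in\{-1,0,1\}$) be the matrix units of $\mathrm{End}\,\mathbb{C}^3$, with rows and columns indexed by $-1,0,1$. Let $P=\sum_{i,j}e_{ij}\otimes e_{ji}$, $Q=\sum_{i,j}e_{ij}\otimes e_{-i,-j}$ and $R(u)=1-\frac{P}{u}+\frac{Q}{u-\frac12}$. Let $t$ be the transposition on $\mathrm{End}\,\mathbb{C}^3$ given by $(e_{ij})^t=e_{-j,-i}$. The algebra $Y_R(\mathfrak{so}_3)$ is the unital associative algebra over $\mathbb{C}$ generated by elements $t_{ij}^{(r)}$, $r\ge 1$, $i,j\in\{-1,0,1\}$; put $t_{ij}(u)=\delta_{ij}+\sum_{r\ge1}t^{(r)}_{ij}u^{-r}$, $T(u)=\sum_{i,j}t_{ij}(u)\otimes e_{ij}$, $T^t(u)=\sum_{i,j}t_{ij}(u)\otimes e_{-j,-i}$, $T_1(u)=\sum t_{ij}(u)\otimes e_{ij}\otimes 1$, $T_2(v)=\sum t_{ij}(v)\otimes 1\otimes e_{ij}$. The defining relations are $R(u-v)T_1(u)T_2(v)=T_2(v)T_1(u)R(u-v)$ and $T(u)T^t(u+\frac12)=T^t(u+\frac12)T(u)=1$. The Gauss generators are the unique series $k_i(u)\in 1+u^{-1}Y_R(\mathfrak{so}_3)[[u^{-1}]]$ ($i=-1,0,1$)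 and $e_{ij}(u),f_{ji}(u)\in u^{-1}Y_R(\mathfrak{so}_3)[[u^{-1}]]$ ($-1\le i<j\le1$) such that $T(u)=F(u)K(u)E(u)$, where $F(u)$ is the lower unitriangular matrix with below-diagonal entries $F_{0,-1}=f_{0,-1}(u)$, $F_{1,-1}=f_{1,-1}(u)$, $F_{1,0}=f_{1,0}(u)$, $K(u)=\mathrm{diag}(k_{-1}(u),k_0(u),k_1(u))$, and $E(u)$ is the upper unitriangular matrix with above-diagonal entries $E_{-1,0}=e_{-1,0}(u)$, $E_{-1,1}=e_{-1,1}(u)$, $E_{0,1}=e_{01}(u)$ (rows/columns indexed by $-1,0,1$). *)

(* Defs.v *)
From HB Require Import structures.
From mathcomp Require Import all_boot all_order all_algebra.
Set Implicit Arguments. Unset Strict Implicit. Unset Printing Implicit Defensive.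
Import GRing.Theory.
Local Open Scope ring_scope.

(* Conventions.
   - The index set {-1,0,1} is encoded by 'I_3 : -1 |-> 0, 0 |-> 1, 1 |-> 2.
     Then i |-> -i is rev_ord.
   - A one-variable series s : nat -> A stands for  sum_{n>=0} s n * u^{-n}.
   - A two-variable object X : int -> int -> A stands for sum_{a,b} X a b u^a v^b
     (coefficients of u^a v^b, a,b in Z).
   - An element of A (x) End C^3 (x) End C^3 with coefficients in such
     two-variable objects is a function (i j k l : 'I_3) -> int -> int -> A,
     giving the coefficient of e_ij (x) e_kl. *)

Definition im1 : 'I_3 := @Ordinal 3 0 isT.
Definition i0  : 'I_3 := @Ordinal 3 1 isT.
Definition ip1 : 'I_3 := @Ordinal 3 2 isT.

Section Defs.
Variables (F : fieldType) (A : algType F).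

Definition ser_one : nat -> A := fun n => (n == 0)%:R.
Definition ser_mul (x y : nat -> A) : nat -> A :=
  fun n => \sum_(r < n.+1) x r * y (n - r)%N.

(* coefficients of x(u + c), where x(u) = sum_r x r u^{-r}:
   (u+c)^{-r} = sum_m (-1)^m C(r+m-1,m) c^m u^{-r-m}. *)
Definition ser_shift (c : F) (x : nat -> A) : nat -> A :=
  fun n => \sum_(r < n.+1)
             ((-1) ^+ (n - r) * ('C(n.-1, n - r))%:R * c ^+ (n - r)) *: x r.

Definition ser2 (c : nat -> nat -> A) : int -> int -> A :=
  fun a b => if (a <= 0) && (b <= 0) then c `|a|%N `|b|%N else 0.
(* g(u) and g(v) as two-variable objects *)
Definition lift_u (g : nat -> A) : int -> int -> A :=
  ser2 (fun m n => if n == 0%N then g m else 0).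
Definition lift_v (g : nat -> A) : int -> int -> A :=
  ser2 (fun m n => if m == 0%N then g n else 0).
(* multiplication by (u - v) *)
Definition mul_umv (X : int -> int -> A) : int -> int -> A :=
  fun a b => X (a - 1) b - X a (b - 1).
Definition half : F := (2%:R)^-1.
(* multiplication by (u - v - 1/2) *)
Definition mul_umvh (X : int -> int -> A) : int -> int -> A :=
  fun a b => mul_umv X a b - half *: X a b.

Definition op4 (B : Type) := 'I_3 -> 'I_3 -> 'I_3 -> 'I_3 -> B.

Definition Pmat : op4 F := fun i j k l => ((i == l) && (j == k))%:R.
Definition Qmat : op4 F := fun i j k l => ((k == rev_ord i) && (l == rev_ord j))%:R.

Definition opmul_l (S : op4 F) (X : op4 (int -> int -> A)) : op4 (int -> int -> A) :=
  fun i j k l a b => \sum_(p < 3) \sum_(q < 3) S i p k q *: X p j q l a b.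
Definition opmul_r (X : op4 (int -> int -> A)) (S : op4 F) : op4 (int -> int -> A) :=
  fun i j k l a b => \sum_(p < 3) \sum_(q < 3) S p j q l *: X i p k q a b.

(* (u-v)(u-v-1/2) R(u-v) = (u-v)(u-v-1/2) - (u-v-1/2) P + (u-v) Q *)
Definition Rmul_l (X : op4 (int -> int -> A)) : op4 (int -> int -> A) :=
  fun i j k l a b =>
    mul_umv (mul_umvh (X i j k l)) a b
    - mul_umvh (opmul_l Pmat X i j k l) a b
    + mul_umv (opmul_l Qmat X i j k l) a b.
Definition Rmul_r (X : op4 (int -> int -> A)) : op4 (int -> int -> A) :=
  fun i j k l a b =>
    mul_umv (mul_umvh (X i j k l)) a b
    - mul_umvh (opmul_r X Pmat i j k l) a b
    + mul_umv (opmul_r X Qmat i j k l) a b.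

(* T i j : the series t_ij(u) (coefficient 0 is delta_ij) *)
Definition T1T2 (T : 'I_3 -> 'I_3 -> nat -> A) : op4 (int -> int -> A) :=
  fun i j k l => ser2 (fun m n => T i j m * T k l n).
Definition T2T1 (T : 'I_3 -> 'I_3 -> nat -> A) : op4 (int -> int -> A) :=
  fun i j k l => ser2 (fun m n => T k l n * T i j m).

Definition YR_so3_rel (T : 'I_3 -> 'I_3 -> nat -> A) : Prop :=
  [/\ (forall i j, T i j 0%N = (i == j)%:R),
      (* R(u-v) T_1(u) T_2(v) = T_2(v) T_1(u) R(u-v), cleared of denominators *)
      (forall i j k l a b, Rmul_l (T1T2 T) i j k l a b = Rmul_r (T2T1 T) i j k l a b),
      (* T(u) T^t(u+1/2) = 1, with T^t_{pq}(u) = t_{-q,-p}(u) *)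
      (forall i j n, \sum_(p < 3)
          ser_mul (T i p) (ser_shift half (T (rev_ord j) (rev_ord p))) n
          = (i == j)%:R * ser_one n) &
      (* T^t(u+1/2) T(u) = 1 *)
      (forall i j n, \sum_(p < 3)
          ser_mul (ser_shift half (T (rev_ord p) (rev_ord i))) (T p j) n
          = (i == j)%:R * ser_one n)].

Definition Fmat (f : 'I_3 -> 'I_3 -> nat -> A) : 'I_3 -> 'I_3 -> nat -> A :=
  fun i j => if i == j then ser_one else if (j < i)%N then f i j else (fun _ => 0).
Definition Emat (e : 'I_3 -> 'I_3 -> nat -> A) : 'I_3 -> 'I_3 -> nat -> A :=
  fun i j => if i == j then ser_one else if (i < j)%N then e i j else (fun _ => 0).

Definition gauss_decomp (T : 'I_3 -> 'I_3 -> nat -> A)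
    (k : 'I_3 -> nat -> A) (e f : 'I_3 -> 'I_3 -> nat -> A) : Prop :=
  [/\ (forall i, k i 0%N = 1),
      (forall i j : 'I_3, (i < j)%N -> e i j 0%N = 0),
      (forall i j : 'I_3, (i < j)%N -> f j i 0%N = 0) &
      (forall i j n, T i j n =
         \sum_(p < 3) ser_mul (ser_mul (Fmat f i p) (k p)) (Emat e p j) n)].

End Defs.

(* Main.v *)
Require Import Defs.
From HB Require Import structures.
From mathcomp Require Import all_boot all_order all_algebra.
Import GRing.Theory.
Local Open Scope ring_scope.
From mathcomp Require Import boolp.
From mathcomp Require Import zify.
Set Implicit Arguments. Unset Strict Implicit. Unset Printing Implicit Defensive.

Section ZSolve.
Variable V : zmodType.
Definition zterm (l : seq V) (p : bool * nat) := if p.1 then - nth 0 l p.2 else nth 0 l p.2.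
Definition zev (l : seq V) (s : seq (bool * nat)) :=
  match s with [::] => 0 | p :: s' => foldl (fun acc q => acc + zterm l q) (zterm l p) s' end.
Definition zpos (s : seq (bool * nat)) i := count (fun p => (p.2 == i) && ~~ p.1) s.
Definition zneg (s : seq (bool * nat)) i := count (fun p => (p.2 == i) && p.1) s.

Lemma zevE l s : zev l s = \sum_(p <- s) zterm l p.
Proof.
case: s => [|p s]; first by rewrite big_nil.
rewrite /zev big_cons; elim: s (zterm l p) => [|q s IH] acc /=; first by rewrite big_nil addr0.
by rewrite IH big_cons addrA.
Qed.

Lemma zsum l s : all (fun p => p.2 < size l)%N s ->
  \sum_(p <- s) zterm l p =
  \sum_(i <- iota 0 (size l)) (nth 0 l i *+ zpos s i - nth 0 l i *+ zneg s i).
Proof.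
elim: s => [|p s IH] /=; first by rewrite big_nil big1 // => i _; rewrite subrr.
case/andP=> hp hs; rewrite big_cons IH //.
have -> : \sum_(i <- iota 0 (size l))
      (nth 0 l i *+ zpos (p :: s) i - nth 0 l i *+ zneg (p :: s) i) =
   \sum_(i <- iota 0 (size l)) ((nth 0 l i *+ ((p.2 == i) && ~~ p.1) - nth 0 l i *+ ((p.2 == i) && p.1))
      + (nth 0 l i *+ zpos s i - nth 0 l i *+ zneg s i)).
  apply: eq_bigr => i _; rewrite /zpos /zneg /= !mulrnDr.
  by rewrite opprD addrACA.
rewrite [RHS]big_split /=; congr (_ + _).
rewrite (bigD1_seq p.2) ?iota_uniq ?mem_iota ?add0n //= eqxx.
rewrite big1_seq ?addr0.
  by rewrite /zterm; case: p.1; rewrite /= ?mulr0n ?mulr1n ?sub0r ?subr0.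
move=> i /andP [hi _]; rewrite eq_sym (negbTE hi) /= !mulr0n subrr //.
Qed.

Lemma zsolve_lem (l : seq V) s1 s2 :
  all (fun p => p.2 < size l)%N s1 -> all (fun p => p.2 < size l)%N s2 ->
  all (fun i => zpos s1 i + zneg s2 i == zpos s2 i + zneg s1 i)%N (iota 0 (size l)) ->
  zev l s1 = zev l s2.
Proof.
move=> h1 h2 /allP h; rewrite !zevE !zsum //; apply: eq_big_seq => i /h /eqP e.
apply/eqP; rewrite subr_eq addrAC eq_sym subr_eq -!mulrnDr.
by rewrite e.
Qed.
End ZSolve.

Ltac zeq x h := constr:(ltac:(tryif unify x h then exact true else exact false) : bool).
Ltac zadd_atom x l :=
  lazymatch l with
  | nil => constr:(x :: l)
  | ?h :: ?t => let b := zeq x h in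
      lazymatch b with
      | true => l
      | false => let t' := zadd_atom x t in constr:(h :: t')
      end
  end.
Ltac zatoms e l :=
  lazymatch e with
  | (?x + ?y)%R => let l1 := zatoms x l in zatoms y l1
  | (- ?x)%R => zatoms x l
  | _ => zadd_atom e l
  end.
Ltac zidx x l :=
  lazymatch l with
  | ?h :: ?t => let b := zeq x h in
      lazymatch b with
      | true => constr:(0%N)
      | false => let n := zidx x t in constr:(n.+1)
      end
  end.
Ltac zreify e l :=
  lazymatch e with
  | (?x + ?y)%R => let a := zreify x l in let b := zreify y l in constr:(a ++ b)
  | (- ?x)%R => let n := zidx x l in constr:([:: (true, n)])
  | _ => let n := zidx e l in constr:([:: (false, n)])
  end.
Ltac zsolve :=
  lazymatch goal with |- ?e1 = ?e2 =>
    let T := type of e1 in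
    let l0 := zatoms e1 (@nil T) in
    let l := zatoms e2 l0 in
    let s1 := zreify e1 l in let s2 := zreify e2 l in
    let s1 := eval simpl in s1 in let s2 := eval simpl in s2 in
    change (zev l s1 = zev l s2); apply: zsolve_lem; vm_compute; reflexivity
  end.

Lemma ztest (R : ringType) (a b c d : R) : a * b - c + d - (a * b) = d - c.
Proof. zsolve. Qed.

Record ser (R : Type) := Ser { sc : nat -> R }.
Arguments Ser {R}. Arguments sc {R}.

Lemma serP R (s t : ser R) : (forall n, sc s n = sc t n) -> s = t.
Proof. case: s; case: t => f g H; congr Ser; apply: funext => n; exact: H. Qed.

HB.instance Definition _ (R : Type) := gen_eqMixin (ser R).
HB.instance Definition _ (R : Type) := gen_choiceMixin (ser R).

Section SerZmod.
Variable R : zmodType.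
Definition szero : ser R := Ser (fun _ => 0).
Definition sopp (s : ser R) := Ser (fun n => - sc s n).
Definition sadd (s t : ser R) := Ser (fun n => sc s n + sc t n).
Lemma saddA : associative sadd.
Proof. by move=> ? ? ?; apply: serP => n /=; rewrite addrA. Qed.
Lemma saddC : commutative sadd.
Proof. by move=> ? ?; apply: serP => n /=; rewrite addrC. Qed.
Lemma sadd0 : left_id szero sadd.
Proof. by move=> ?; apply: serP => n /=; rewrite add0r. Qed.
Lemma saddN : left_inverse szero sopp sadd.
Proof. by move=> ?; apply: serP => n /=; rewrite addNr. Qed.
HB.instance Definition _ := GRing.isZmodule.Build (ser R) saddA saddC sadd0 saddN.
Lemma sc0 n : sc (0 : ser R) n = 0. Proof. by []. Qed.
Lemma scD s t n : sc (s + t) n = sc s n + sc t n. Proof. by []. Qed.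
Lemma scN s n : sc (- s) n = - sc s n. Proof. by []. Qed.
Lemma scB s t n : sc (s - t) n = sc s n - sc t n. Proof. by []. Qed.
Lemma sc_sum I (r : seq I) (P : pred I) (G : I -> ser R) n :
  sc (\sum_(i <- r | P i) G i) n = \sum_(i <- r | P i) sc (G i) n.
Proof. by elim/big_rec2: _ => // i y1 y2 _ <-. Qed.
End SerZmod.

Section SerRing.
Variable R : nzRingType.
Definition sone : ser R := Ser (fun n => (n == 0)%:R).
Definition smul (s t : ser R) : ser R :=
  Ser (fun n => \sum_(r < n.+1) sc s r * sc t (n - r)).

Definition trunc N (s : ser R) : {poly R} := \poly_(i < N) sc s i.

Lemma coefM_congr (p p' q q' : {poly R}) n :
  (forall j, (j <= n)%N -> p`_j = p'`_j) -> (forall j, (j <= n)%N -> q`_j = q'`_j) ->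
  (p * q)`_n = (p' * q')`_n.
Proof.
move=> Hp Hq; rewrite !coefM; apply: eq_bigr => i _.
by rewrite Hp ?Hq // ?leq_subr // -ltnS.
Qed.

Lemma smul_trunc N s t n : (n < N)%N -> sc (smul s t) n = (trunc N s * trunc N t)`_n.
Proof.
move=> nN; rewrite coefM /=; apply: eq_bigr => i _.
rewrite !coef_poly (leq_ltn_trans _ nN) ?(leq_ltn_trans _ nN) ?leq_subr //.
by rewrite -ltnS.
Qed.

Lemma smulA : associative smul.
Proof.
move=> s t u; apply: serP => n.
have H j x y : (j <= n)%N -> (trunc n.+1 (smul x y))`_j = (trunc n.+1 x * trunc n.+1 y)`_j.
  by move=> jn; rewrite coef_poly ltnS jn -(smul_trunc (N:=n.+1)).
rewrite (smul_trunc (N:=n.+1)) // [RHS](smul_trunc (N:=n.+1)) //.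
transitivity ((trunc n.+1 s * (trunc n.+1 t * trunc n.+1 u))`_n).
  by apply: coefM_congr => // j jn; rewrite H.
by rewrite mulrA; apply: coefM_congr => // j jn; rewrite H.
Qed.

Lemma smul1 : left_id sone smul.
Proof.
move=> s; apply: serP => n /=; rewrite big_ord_recl /= mul1r subn0 big1 ?addr0 //.
by move=> i _; rewrite mul0r.
Qed.
Lemma smulr1 : right_id sone smul.
Proof.
move=> s; apply: serP => n /=; rewrite big_ord_recr /= subnn mulr1 big1 ?add0r //.
move=> i _; rewrite subn_eq0 leqNgt ltn_ord /= mulr0 //.
Qed.
Lemma smulDl : left_distributive smul +%R.
Proof.
move=> s t u; apply: serP => n /=; rewrite -big_split /=.
by apply: eq_bigr => i _; rewrite mulrDl.
Qed.
Lemma smulDr : right_distributive smul +%R.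
Proof.
move=> s t u; apply: serP => n /=; rewrite -big_split /=.
by apply: eq_bigr => i _; rewrite mulrDr.
Qed.
Lemma sone_neq0 : sone != 0.
Proof.
apply/eqP => H; have := congr1 (fun s => sc s 0) H => /=.
by move/eqP; rewrite oner_eq0.
Qed.
HB.instance Definition _ := GRing.Zmodule_isNzRing.Build (ser R) smulA smul1 smulr1 smulDl smulDr sone_neq0.

Lemma scM s t n : sc (s * t) n = \sum_(r < n.+1) sc s r * sc t (n - r). Proof. by []. Qed.
Lemma sc1 n : sc (1 : ser R) n = (n == 0)%:R. Proof. by []. Qed.

Definition cst (a : R) : ser R := Ser (fun n => if n == 0%N then a else 0).
Lemma sc_cstM a s n : sc (cst a * s) n = a * sc s n.
Proof.
rewrite scM big_ord_recl /= subn0 big1 ?addr0 // => i _; by rewrite mul0r.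
Qed.
Lemma sc_Mcst a s n : sc (s * cst a) n = sc s n * a.
Proof.
rewrite scM big_ord_recr /= subnn eqxx big1 ?add0r // => i _.
by rewrite subn_eq0 leqNgt ltn_ord /= mulr0.
Qed.
Lemma cstM a b : cst (a * b) = cst a * cst b.
Proof. apply: serP => n; rewrite sc_cstM /=; case: eqP => _ //; by rewrite mulr0. Qed.
Lemma cstD a b : cst (a + b) = cst a + cst b.
Proof. apply: serP => n /=; case: eqP => _ //; by rewrite addr0. Qed.
Lemma cstB a b : cst (a - b) = cst a - cst b.
Proof. apply: serP => n /=; case: eqP => _ //; by rewrite subr0. Qed.
Lemma cst1 : cst 1 = 1.
Proof. by apply: serP => n /=; case: n. Qed.
Lemma cst0 : cst 0 = 0.
Proof. by apply: serP => n /=; case: n. Qed.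

Lemma cst_sum I (r : seq I) (P : pred I) (G : I -> R) :
  cst (\sum_(i <- r | P i) G i) = \sum_(i <- r | P i) cst (G i).
Proof. elim/big_rec2: _ => [|i y1 y2 _ <-]; by rewrite ?cst0 ?cstD. Qed.
Definition Xs : ser R := Ser (fun n => (n == 1%N)%:R).
Lemma sc_XM s n : sc (Xs * s) n = if n is m.+1 then sc s m else 0.
Proof.
rewrite scM; case: n => [|n]; first by rewrite big_ord1 /= mul0r.
rewrite big_ord_recl /= mul0r add0r big_ord_recl /= mul1r subSS subn0 big1 ?addr0 //.
by move=> i _; rewrite mul0r.
Qed.
Lemma sc_MX s n : sc (s * Xs) n = if n is m.+1 then sc s m else 0.
Proof.
rewrite scM; case: n => [|n]; first by rewrite big_ord1 /= mulr0.
rewrite big_ord_recr /= subnn mulr0 addr0 big_ord_recr /= subSn // subnn mulr1.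
rewrite big1 ?add0r // => i _.
rewrite subSn; last by apply: ltnW; rewrite ltn_ord.
by rewrite eqSS subn_eq0 leqNgt ltn_ord mulr0.
Qed.
Lemma XsC s : Xs * s = s * Xs.
Proof. by apply: serP => n; rewrite sc_XM sc_MX. Qed.
End SerRing.
Arguments Xs {R}.
Section Two.
Variable R : nzRingType.
Local Notation S := (ser (ser R)).
Definition coef (Z : S) i j := sc (sc Z i) j.
Lemma coefP (Z W : S) : (forall i j, coef Z i j = coef W i j) -> Z = W.
Proof. by move=> H; apply: serP => i; apply: serP => j; apply: H. Qed.
Lemma coefD (Z W : S) i j : coef (Z + W) i j = coef Z i j + coef W i j. Proof. by []. Qed.
Lemma coefB (Z W : S) i j : coef (Z - W) i j = coef Z i j - coef W i j. Proof. by []. Qed.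
Lemma coef0 i j : coef 0 i j = 0. Proof. by []. Qed.
Lemma coefM (Z W : S) i j : coef (Z * W) i j =
  \sum_(p < i.+1) \sum_(q < j.+1) coef Z p q * coef W (i - p) (j - q).
Proof. by rewrite /coef scM sc_sum; apply: eq_bigr => p _; rewrite scM. Qed.

Definition U (s : ser R) : S := Ser (fun i => cst (sc s i)).
Definition V (s : ser R) : S := cst s.
Lemma coefU s i j : coef (U s) i j = if j == 0%N then sc s i else 0. Proof. by []. Qed.
Lemma coefV s i j : coef (V s) i j = if i == 0%N then sc s j else 0.
Proof. by rewrite /coef /V /=; case: eqP. Qed.

Lemma UM s t : U (s * t) = U s * U t.
Proof.
apply: serP => i; rewrite (scM (U s) (U t)) /U /= cst_sum; apply: eq_bigr => p _; by rewrite cstM.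
Qed.
Lemma UD s t : U (s + t) = U s + U t.
Proof. by apply: serP => i; rewrite /= cstD. Qed.
Lemma UB s t : U (s - t) = U s - U t.
Proof. by apply: serP => i; rewrite /= cstB. Qed.
Lemma U1 : U 1 = 1.
Proof. apply: serP => i /=; by case: (i == 0%N); rewrite ?cst1 ?cst0. Qed.
Lemma U0 : U 0 = 0.
Proof. by apply: serP => i /=; rewrite cst0. Qed.
Lemma U_sum I (r : seq I) (P : pred I) (G : I -> ser R) :
  U (\sum_(i <- r | P i) G i) = \sum_(i <- r | P i) U (G i).
Proof. elim/big_rec2: _ => [|i y1 y2 _ <-]; by rewrite ?U0 ?UD. Qed.
Lemma VM s t : V (s * t) = V s * V t. Proof. exact: cstM. Qed.
Lemma VD s t : V (s + t) = V s + V t. Proof. exact: cstD. Qed.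
Lemma VB s t : V (s - t) = V s - V t. Proof. exact: cstB. Qed.
Lemma V1 : V 1 = 1. Proof. exact: cst1. Qed.
Lemma V0 : V 0 = 0. Proof. exact: cst0. Qed.
Lemma V_sum I (r : seq I) (P : pred I) (G : I -> ser R) :
  V (\sum_(i <- r | P i) G i) = \sum_(i <- r | P i) V (G i).
Proof. exact: cst_sum. Qed.

Lemma coefUV s t i j : coef (U s * V t) i j = sc s i * sc t j.
Proof. by rewrite /coef /V sc_Mcst sc_cstM. Qed.
Lemma coefVU s t i j : coef (V t * U s) i j = sc t j * sc s i.
Proof. by rewrite /coef /V sc_cstM sc_Mcst. Qed.

Definition xx : S := U Xs.
Definition yy : S := V Xs.
Lemma xxE : xx = Xs.
Proof. apply: serP => i /=; by case: (i == 1%N); rewrite ?cst1 ?cst0. Qed.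
Lemma coef_xM Z i j : coef (xx * Z) i j = if i is i'.+1 then coef Z i' j else 0.
Proof. by rewrite xxE /coef sc_XM; case: i. Qed.
Lemma coef_yM Z i j : coef (yy * Z) i j = if j is j'.+1 then coef Z i j' else 0.
Proof. by rewrite /coef /yy /V sc_cstM sc_XM. Qed.
Lemma xxC Z : xx * Z = Z * xx.
Proof. by rewrite xxE XsC. Qed.
Lemma yyC Z : yy * Z = Z * yy.
Proof. by apply: serP => i; rewrite /yy /V sc_cstM sc_Mcst XsC. Qed.

Definition CC (c : R) : S := cst (cst c).
Lemma coef_CM c Z i j : coef (CC c * Z) i j = c * coef Z i j.
Proof. by rewrite /coef /CC sc_cstM sc_cstM. Qed.
Lemma CCC c Z : (forall a, c * a = a * c) -> CC c * Z = Z * CC c.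
Proof.
move=> Hc; apply: serP => i; rewrite /CC sc_cstM sc_Mcst.
by apply: serP => j; rewrite sc_cstM sc_Mcst.
Qed.

Lemma cancelE c Z : yy * Z - xx * Z - CC c * (xx * (yy * Z)) = 0 -> Z = 0.
Proof.
move=> H.
have E i j : coef Z i j - (if i is i'.+1 then coef Z i' j.+1 else 0)
   - c * (if i is i'.+1 then coef Z i' j else 0) = 0.
  have := congr1 (fun W => coef W i j.+1) H.
  by rewrite !coefB coef_CM coef_xM coef_yM coef_xM; case: i => [|i] //; rewrite coef_yM.
have Z0 i : forall j, coef Z i j = 0.
  elim: i => [|i IH] j; first by have := E 0%N j; rewrite subr0 mulr0 subr0.
  by have := E i.+1 j; rewrite !IH mulr0 !subr0.
by apply: coefP => i j; rewrite Z0.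
Qed.

Definition tau (Z : S) : S := Ser (fun i => Ser (fun j => coef Z j i)).
Lemma coef_tau Z i j : coef (tau Z) i j = coef Z j i. Proof. by []. Qed.
Lemma tauM Z W : tau (Z * W) = tau Z * tau W.
Proof. by apply: coefP => i j; rewrite coef_tau !coefM exchange_big. Qed.
Lemma tauB Z W : tau (Z - W) = tau Z - tau W.
Proof. by apply: coefP => i j. Qed.
Lemma tauU s : tau (U s) = V s.
Proof. by apply: coefP => i j; rewrite coef_tau coefU coefV. Qed.
Lemma tauV s : tau (V s) = U s.
Proof. by apply: coefP => i j; rewrite coef_tau coefU coefV. Qed.
Lemma tau_xx : tau xx = yy. Proof. exact: tauU. Qed.
Lemma tau_yy : tau yy = xx. Proof. exact: tauV. Qed.

Lemma Klemma (Z : S) s : yy * Z - xx * Z = xx * (yy * V s) -> s = 0.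
Proof.
move=> H.
have E i j : (if j is j'.+1 then coef Z i j' else 0) - (if i is i'.+1 then coef Z i' j else 0)
   = (if i is i'.+1 then if j is j'.+1 then (if i' == 0%N then sc s j' else 0) else 0 else 0).
  have := congr1 (fun W => coef W i j) H.
  rewrite coefB coef_yM coef_xM coef_xM; case: i => [|i] //; case: j => [|j] //;
  by rewrite coef_yM ?coefV.
have Z1 i : coef Z i 0 = 0.
  by have := E i.+1 0%N; rewrite sub0r => /eqP; rewrite oppr_eq0 => /eqP.
have Z2 j : forall i, coef Z i.+1 j = 0.
  elim: j => [|j IH] i; first exact: Z1.
  by have := E i.+2 j.+1 => /=; rewrite IH sub0r => /eqP; rewrite oppr_eq0 => /eqP.
have Z3 j : coef Z 0 j = 0.
  by have := E 0%N j.+1 => /=; rewrite subr0.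
apply: serP => j; have := E 1%N j.+1 => /=; by rewrite Z2 Z3 subr0.
Qed.

Definition Dd (g : ser R) : S := Ser (fun i => Ser (fun j => sc g (i + j).+1)).
Lemma DdE g : U g - V g = xx * Dd g - yy * Dd g.
Proof.
apply: coefP => i j; rewrite !coefB coefU coefV coef_xM coef_yM.
case: i => [|i]; case: j => [|j] /=; rewrite ?subrr //.
- by rewrite !subr0 /coef /= addn0.
- by rewrite /coef /= addnS addSn subrr.
Qed.
End Two.
Arguments xx {R}. Arguments yy {R}.
Section Core.
Variable R : nzRingType.
Variables D P au av eu ev fu fv ku kv iu iv : R.
Hypothesis cD : forall z, D * z = z * D.
Hypothesis cP : forall z, P * z = z * P.
Hypothesis Dcan : forall z, D * z = 0 -> z = 0.
Hypotheses (hu1 : iu * au = 1) (hu2 : au * iu = 1) (hv1 : iv * av = 1) (hv2 : av * iv = 1).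
Hypothesis H1 : au * av = av * au.
Hypothesis H2 : D * (au * (fv * av) - (fv * av) * au) = P * ((fu * au) * av - (fv * av) * au).
Hypothesis H3 : D * ((au * eu) * av - av * (au * eu)) = P * (av * (au * eu) - au * (av * ev)).

Lemma swapA X : X * av * au = X * au * av.
Proof. by rewrite -!mulrA H1. Qed.

Lemma stepF : D * (au * fv) = ((D - P) * fv + P * fu) * au.
Proof.
suff Hs : D * (au * fv) * av = ((D - P) * fv + P * fu) * au * av.
  have := congr1 (fun z => z * iv) Hs; by rewrite -!mulrA hv2 !mulr1.
move: H2; rewrite !mulrBr !mulrA !swapA => /eqP; rewrite subr_eq => /eqP ->.
rewrite !mulrDl ?mulrBl ?mulrA !mulNr.
by rewrite [LHS]addrC [LHS]addrA [RHS]addrAC.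
Qed.

Lemma lcan X Y : au * X = au * Y -> X = Y.
Proof. by move=> H; rewrite -[X]mul1r -hu1 -mulrA H mulrA hu1 mul1r. Qed.
Lemma rcan X Y : X * av = Y * av -> X = Y.
Proof. by move=> H; rewrite -[X]mulr1 -hv2 mulrA H -mulrA hv2 mulr1. Qed.

Lemma stepE : D * eu * av = D * av * eu + P * av * eu - P * av * ev.
Proof.
apply: lcan; move: H3; rewrite !mulrBr !mulrA !swapA => /eqP; rewrite subr_eq => /eqP H.
rewrite mulrDr !mulrA -[au * D]cD -[au * P]cP H.
by rewrite [LHS](ACl (3*1*2)).
Qed.

Ltac expand := rewrite ?(mulrDr, mulrDl, mulrBr, mulrBl, mulrN, mulNr, opprD, opprK, mulrA, addrA).
Ltac pureD X := lazymatch X with D => idtac | ?Y * D => pureD Y end.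
Ltac pureDP X := lazymatch X with D => idtac | P => idtac | ?Y * D => pureDP Y | ?Y * P => pureDP Y end.
Ltac cnorm := rewrite ?mulrA;
  repeat (match goal with
   | |- context [?X * D] => tryif pureD X then fail else rewrite -[X * D]cD ?mulrA
   | |- context [?X * P] => tryif pureDP X then fail else rewrite -[X * P]cP ?mulrA
   end).


Hypothesis H4 : D * ((au * eu) * (fv * av) - (fv * av) * (au * eu)) =
  P * ((fu * au * eu + ku) * av - (fv * av * ev + kv) * au).
Hypothesis H5 : D * (au * (fv * av * ev + kv) - (fv * av * ev + kv) * au) =
  P * ((fu * au) * (av * ev) - (fv * av) * (au * eu)).

Lemma E3n : D * fv * au * eu * av =
  D * fv * au * av * eu + P * fv * au * av * eu - P * fv * au * av * ev.
Proof.
have := congr1 (fun z => fv * au * z) stepE; rewrite /= !mulrDr !mulrN.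
cnorm. by [].
Qed.

Lemma Fn : D * au * fv = D * fv * au - P * fv * au + P * fu * au.
Proof. move: stepF; rewrite !mulrDl ?mulrBl !mulNr. cnorm. by []. Qed.

Lemma comb6 (G X1 X2 X3 X4 X5 X6 : R) : X1 = 0 -> X2 = 0 -> X3 = 0 -> X4 = 0 -> X5 = 0 -> X6 = 0 ->
  G = X1 - X2 - X3 + X4 + X5 - X6 -> G = 0.
Proof. by move=> -> -> -> -> -> -> ->; rewrite !(subr0, addr0). Qed.

Ltac to0 h := move/eqP: h; rewrite -subr_eq0 => /eqP h.

Lemma core_main : D * D * (au * eu * fv * av) - D * D * (au * fv * eu * av) =
  D * P * (ku * av) - D * P * (au * kv).
Proof.
have h4 := congr1 (fun z => D * z) H4; move: h4 => /=.
expand; cnorm; rewrite ?swapA => h4.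
have f1 := congr1 (fun z => D * z * eu * av) Fn; move: f1 => /=; expand; cnorm => f1.
have e1 := congr1 (fun z => D * z) E3n; move: e1 => /=; expand; cnorm => e1.
have e2 := congr1 (fun z => P * z) E3n; move: e2 => /=; expand; cnorm => e2.
have h5 := congr1 (fun z => P * z) H5; move: h5 => /=; expand; cnorm; rewrite ?swapA => h5.
have f2 := congr1 (fun z => P * z * av * ev) Fn; move: f2 => /=; expand; cnorm => f2.
to0 h4; to0 f1; to0 e1; to0 e2; to0 h5; to0 f2.
apply/eqP; rewrite -subr_eq0; apply/eqP.
apply: (comb6 h4 f1 e1 e2 h5 f2).
rewrite ?opprD ?opprK ?addrA.
zsolve.
Qed.

Lemma zsub (a b c : R) : a = b -> c = a - b -> c = 0.
Proof. by move=> -> ->; rewrite subrr. Qed.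
Lemma canu X : X * iu * au = X. Proof. by rewrite -mulrA hu1 mulr1. Qed.
Lemma canv X : X * av * iv = X. Proof. by rewrite -mulrA hv2 mulr1. Qed.

Lemma core : D * (eu * fv - fv * eu) = P * (iu * ku - kv * iv).
Proof.
have h : D * (au * eu * fv * av) - D * (au * fv * eu * av) = P * (ku * av) - P * (au * kv).
  apply/eqP; rewrite -subr_eq0; apply/eqP; apply: Dcan.
  apply: (zsub core_main); expand; zsolve.
have := congr1 (fun z => iu * z * iv) h => /=.
expand; cnorm; rewrite ?canu ?canv => ->.
by expand; cnorm.
Qed.
End Core.
Local Open Scope ring_scope.
Ltac expand := rewrite ?(mulrDr, mulrDl, mulrBr, mulrBl, mulrN, mulNr, opprD, opprK, mulrA, addrA).
Ltac pure1 c X := lazymatch X with c => idtac | ?Y * c => pure1 c Y end.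
Ltac pure2 c1 c2 X := lazymatch X with c1 => idtac | c2 => idtac | ?Y * c1 => pure2 c1 c2 Y | ?Y * c2 => pure2 c1 c2 Y end.
Ltac pure3 c1 c2 c3 X := lazymatch X with c1 => idtac | c2 => idtac | c3 => idtac
  | ?Y * c1 => pure3 c1 c2 c3 Y | ?Y * c2 => pure3 c1 c2 c3 Y | ?Y * c3 => pure3 c1 c2 c3 Y end.
Ltac cnorm3 c1 h1 c2 h2 c3 h3 := rewrite ?mulrA;
  repeat (match goal with
   | |- context [?X * c1] => tryif pure1 c1 X then fail else rewrite -[X * c1]h1 ?mulrA
   | |- context [?X * c2] => tryif pure2 c1 c2 X then fail else rewrite -[X * c2]h2 ?mulrA
   | |- context [?X * c3] => tryif pure3 c1 c2 c3 X then fail else rewrite -[X * c3]h3 ?mulrA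
   end).

Section Emb.
Variables (F : fieldType) (A : algType F).
Local Notation S := (ser (ser A)).

Definition emb (p : nat) (Z : S) (a b : int) : A :=
  if (a <= p%:Z) && (b <= p%:Z) then coef Z (absz (p%:Z - a)) (absz (p%:Z - b)) else 0.

Lemma emb_out p Z a b : (p%:Z < a) || (p%:Z < b) -> emb p Z a b = 0.
Proof. by rewrite /emb => h; case: ifP => //; move/andP => [h1 h2]; move: h; lia. Qed.

Lemma emb_at p Z (i j : nat) : emb p Z (p%:Z - i%:Z) (p%:Z - j%:Z) = coef Z i j.
Proof.
rewrite /emb; case: ifP => [_|]; last by lia.
have -> : p%:Z - (p%:Z - i%:Z) = i%:Z by lia.
by have -> : p%:Z - (p%:Z - j%:Z) = j%:Z by lia.
Qed.

Lemma int_cases (p : nat) (a : int) : (p%:Z < a) \/ (exists i : nat, a = p%:Z - i%:Z).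
Proof.
case: (Order.TotalTheory.ltP (p%:Z) a) => h; first by left.
by right; exists (absz (p%:Z - a)); lia.
Qed.

Lemma emb_umv_pt p Z a b : mul_umv (emb p Z) a b = emb p.+1 (yy * Z - xx * Z) a b.
Proof.
rewrite /mul_umv.
case: (int_cases p.+1 a) => [ha|[i ->]].
  by rewrite !emb_out ?subrr //; apply/orP; left; lia.
case: (int_cases p.+1 b) => [hb|[j ->]].
  by rewrite !emb_out ?subrr //; apply/orP; right; lia.
rewrite emb_at coefB coef_yM coef_xM.
case: i => [|i]; case: j => [|j].
- by rewrite !emb_out ?subrr //; lia.
- rewrite [emb p Z _ (_ - 1)]emb_out; last by apply/orP; left; lia.
  have -> : ((p.+1)%:Z - 0%:Z - 1) = p%:Z - 0%:Z by lia.
  have -> : ((p.+1)%:Z - (j.+1)%:Z) = p%:Z - j%:Z by lia.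
  by rewrite emb_at subr0.
- rewrite [emb p Z (_ - 1) _]emb_out; last by apply/orP; right; lia.
  have -> : ((p.+1)%:Z - 0%:Z - 1) = p%:Z - 0%:Z by lia.
  have -> : ((p.+1)%:Z - (i.+1)%:Z) = p%:Z - i%:Z by lia.
  by rewrite emb_at sub0r.
- have -> : ((p.+1)%:Z - (i.+1)%:Z - 1) = p%:Z - (i.+1)%:Z by lia.
  have -> : ((p.+1)%:Z - (j.+1)%:Z - 1) = p%:Z - (j.+1)%:Z by lia.
  have -> : ((p.+1)%:Z - (j.+1)%:Z) = p%:Z - j%:Z by lia.
  have -> : ((p.+1)%:Z - (i.+1)%:Z) = p%:Z - i%:Z by lia.
  by rewrite !emb_at.
Qed.

Lemma emb_shift p Z a b : emb p Z a b = emb p.+1 (xx * (yy * Z)) a b.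
Proof.
case: (int_cases p.+1 a) => [ha|[i ->]].
  by rewrite !emb_out //; apply/orP; left; lia.
case: (int_cases p.+1 b) => [hb|[j ->]].
  by rewrite !emb_out //; apply/orP; right; lia.
rewrite emb_at coef_xM.
case: i => [|i]; first by rewrite emb_out //; apply/orP; left; lia.
rewrite coef_yM.
case: j => [|j]; first by rewrite emb_out //; apply/orP; right; lia.
have -> : ((p.+1)%:Z - (j.+1)%:Z) = p%:Z - j%:Z by lia.
have -> : ((p.+1)%:Z - (i.+1)%:Z) = p%:Z - i%:Z by lia.
by rewrite emb_at.
Qed.

Lemma emb_B p Z W a b : emb p (Z - W) a b = emb p Z a b - emb p W a b.
Proof. by rewrite /emb; case: ifP; rewrite ?subr0. Qed.
Lemma emb_D p Z W a b : emb p (Z + W) a b = emb p Z a b + emb p W a b.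
Proof. by rewrite /emb; case: ifP; rewrite ?addr0. Qed.
Lemma emb_scale p Z (c : F) a b : c *: emb p Z a b = emb p (CC (c%:A) * Z) a b.
Proof. by rewrite /emb; case: ifP => _; rewrite ?scaler0 // coef_CM -scalerAl mul1r. Qed.
Lemma emb_inj p Z W : (forall a b, emb p Z a b = emb p W a b) -> Z = W.
Proof. by move=> H; apply: coefP => i j; have := H (p%:Z - i%:Z) (p%:Z - j%:Z); rewrite !emb_at. Qed.

Lemma emb_umv p Z : mul_umv (emb p Z) = emb p.+1 (yy * Z - xx * Z).
Proof. by apply: funext => a; apply: funext => b; rewrite emb_umv_pt. Qed.
Lemma emb_umvh p Z : mul_umvh (emb p Z) =
  emb p.+1 (yy * Z - xx * Z - CC (Defs.half F)%:A * (xx * (yy * Z))).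
Proof.
apply: funext => a; apply: funext => b.
by rewrite /mul_umvh emb_umv_pt (emb_shift p Z a b) emb_scale -emb_B.
Qed.

Lemma ser2_emb (c : nat -> nat -> A) (Z : S) : (forall i j, coef Z i j = c i j) -> ser2 c = emb 0 Z.
Proof.
move=> H; apply: funext => a; apply: funext => b; rewrite /ser2 /emb.
case: ifP => // _; rewrite H.
by rewrite !sub0r !abszN.
Qed.
End Emb.
Section FormAlg.
Variables (R : nzRingType) (x y c : R).
Definition Eform' (M : R) := y * M - x * M - c * (x * (y * M)).
Definition Lform' (M1 M2 : R) := (y * Eform' M1 - x * Eform' M1) - x * (y * Eform' M2).
Hypotheses (hx : forall z, x * z = z * x) (hy : forall z, y * z = z * y) (hc : forall z, c * z = z * c).
Lemma form_alg M1 M2 N1 N2 Z : Lform' M1 M2 = Lform' N1 N2 ->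
  Z = (y - x) * (M1 - N1) - x * y * (M2 - N2) ->
  y * Z - x * Z - c * (x * (y * Z)) = 0.
Proof.
move=> h ->; apply: (zsub h); rewrite /Lform' /Eform'.
expand; cnorm3 x hx y hy c hc.
zsolve.
Qed.
End FormAlg.

Section Rel.
Variables (F : fieldType) (A : algType F).
Local Notation S := (ser (ser A)).

Lemma opmul_lP (X : op4 (int -> int -> A)) i j k l : opmul_l (Pmat F) X i j k l = X k j i l.
Proof.
apply: funext => a; apply: funext => b; rewrite /opmul_l (bigD1 k) //= [X in _ + X]big1 ?addr0; last first.
  by move=> p hp; apply: big1 => q _; rewrite /Pmat (negbTE hp) andbF scale0r.
rewrite (bigD1 i) //= [X in _ + X]big1 ?addr0 /Pmat ?eqxx /= ?scale1r //.
by move=> q hq; rewrite eq_sym (negbTE hq) scale0r.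
Qed.
Lemma opmul_rP (X : op4 (int -> int -> A)) i j k l : opmul_r X (Pmat F) i j k l = X i l k j.
Proof.
apply: funext => a; apply: funext => b; rewrite /opmul_r (bigD1 l) //= [X in _ + X]big1 ?addr0; last first.
  by move=> p hp; apply: big1 => q _; rewrite /Pmat (negbTE hp) scale0r.
rewrite (bigD1 j) //= [X in _ + X]big1 ?addr0 /Pmat ?eqxx /= ?scale1r //.
by move=> q hq; rewrite eq_sym (negbTE hq) ?andbF scale0r.
Qed.
Lemma opmul_lQ (X : op4 (int -> int -> A)) i j k l : k != rev_ord i ->
  opmul_l (Qmat F) X i j k l = fun _ _ => 0.
Proof.
move=> hk; apply: funext => a; apply: funext => b; rewrite /opmul_l big1 // => p _.
by apply: big1 => q _; rewrite /Qmat (negbTE hk) scale0r.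
Qed.
Lemma opmul_rQ (X : op4 (int -> int -> A)) i j k l : l != rev_ord j ->
  opmul_r X (Qmat F) i j k l = fun _ _ => 0.
Proof.
move=> hl; apply: funext => a; apply: funext => b; rewrite /opmul_r big1 // => p _.
by apply: big1 => q _; rewrite /Qmat (negbTE hl) andbF scale0r.
Qed.
Lemma mul_umv0 a b : mul_umv (fun _ _ => 0 : A) a b = 0.
Proof. by rewrite /mul_umv subrr. Qed.

Lemma halfC (z : A) : (Defs.half F)%:A * z = z * (Defs.half F)%:A.
Proof. by rewrite -scalerAl mul1r -scalerAr mulr1. Qed.
Lemma CChC (Z : S) : CC (Defs.half F)%:A * Z = Z * CC (Defs.half F)%:A.
Proof. exact: CCC halfC. Qed.

Definition Eform (M : S) := Eform' (@xx A) (@yy A) (CC (Defs.half F)%:A) M.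
Definition Lform (M1 M2 : S) := Lform' (@xx A) (@yy A) (CC (Defs.half F)%:A) M1 M2.

Lemma combine (X1 X2 X3 : int -> int -> A) M1 M2 a b :
  X1 = emb 0 M1 -> X2 = emb 0 M2 -> X3 = (fun _ _ => 0) ->
  mul_umv (mul_umvh X1) a b - mul_umvh X2 a b + mul_umv X3 a b = emb 2 (Lform M1 M2) a b.
Proof.
move=> -> -> ->; rewrite mul_umv0 addr0 emb_umvh emb_umv emb_umvh (emb_shift 1).
by rewrite -emb_B /Lform /Lform' /Eform'.
Qed.

Variable T : 'I_3 -> 'I_3 -> nat -> A.
Hypothesis hT : YR_so3_rel T.
Definition ts i j : ser A := Ser (T i j).

Lemma rel_gen i j k l : k != rev_ord i -> l != rev_ord j ->
  (yy - xx) * (U (ts i j) * V (ts k l) - V (ts k l) * U (ts i j)) =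
  xx * yy * (U (ts k j) * V (ts i l) - V (ts k j) * U (ts i l)).
Proof.
move=> hk hl; case: hT => _ hR _ _.
have e1 : T1T2 T i j k l = emb 0 (U (ts i j) * V (ts k l)) by apply: ser2_emb => m n; rewrite coefUV.
have e2 : T1T2 T k j i l = emb 0 (U (ts k j) * V (ts i l)) by apply: ser2_emb => m n; rewrite coefUV.
have e3 : T2T1 T i j k l = emb 0 (V (ts k l) * U (ts i j)) by apply: ser2_emb => m n; rewrite coefVU.
have e4 : T2T1 T i l k j = emb 0 (V (ts k j) * U (ts i l)) by apply: ser2_emb => m n; rewrite coefVU.
have H' : forall a b, emb 2 (Lform (U (ts i j) * V (ts k l)) (U (ts k j) * V (ts i l))) a b
   = emb 2 (Lform (V (ts k l) * U (ts i j)) (V (ts k j) * U (ts i l))) a b.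
  move=> a b.
  have c1 := combine a b e1 (etrans (opmul_lP _ i j k l) e2) (opmul_lQ (T1T2 T) j l hk).
  have c2 := combine a b e3 (etrans (opmul_rP _ i j k l) e4) (opmul_rQ (T2T1 T) i k hl).
  exact: (etrans (esym c1) (etrans (hR i j k l a b) c2)).
have hLR := emb_inj H'.
apply/eqP; rewrite -subr_eq0; apply/eqP; apply: (cancelE (c := (Defs.half F)%:A)).
apply: (form_alg (@xxC A) (@yyC A) hLR).
by [].
Qed.
End Rel.
Section AlgAux.
Variables (R : nzRingType) (x y : R).
Hypotheses (hx : forall z, x * z = z * x) (hy : forall z, y * z = z * y).
Lemma H1_alg X : (y - x) * X = x * y * X -> y * X - x * X - 1 * (x * (y * X)) = 0.
Proof. by move=> h; rewrite mul1r -mulrBl h mulrA subrr. Qed.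
Lemma H3_alg p q r : (x - y) * (p - q) = y * x * r -> (y - x) * (q - p) = x * y * r.
Proof. by move=> h; rewrite -opprB mulNr -mulrN opprB h hy. Qed.
Lemma K_alg W Ug Vg Vg' Dd Vs : (y - x) * W = x * y * (Ug - Vg') -> Ug - Vg = x * Dd - y * Dd ->
  Vg - Vg' = Vs -> y * (W + x * y * Dd) - x * (W + x * y * Dd) = x * (y * Vs).
Proof.
move=> h1 h2 h3.
move/eqP: h1; rewrite -subr_eq0 => /eqP h1.
move/eqP: h2; rewrite -subr_eq0 => /eqP h2.
move/eqP: h3; rewrite -subr_eq0 => /eqP h3.
apply/eqP; rewrite -subr_eq0; apply/eqP.
have -> : y * (W + x * y * Dd) - x * (W + x * y * Dd) - x * (y * Vs) =
  ((y - x) * W - x * y * (Ug - Vg')) + x * y * (Ug - Vg - (x * Dd - y * Dd))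
  + x * y * (Vg - Vg' - Vs).
  expand; cnorm3 x hx y hy x hx; zsolve.
by rewrite h1 h2 h3 !mulr0 !addr0.
Qed.
End AlgAux.

Section Final.
Variables (F : fieldType) (A : algType F).
Variables (T : 'I_3 -> 'I_3 -> nat -> A) (k : 'I_3 -> nat -> A) (e f : 'I_3 -> 'I_3 -> nat -> A).
Hypothesis hG : gauss_decomp T k e f.

Lemma Ser_one : Ser (ser_one A) = 1. Proof. by []. Qed.
Lemma Ser_zero : Ser (fun _ : nat => (0 : A)) = 0. Proof. by []. Qed.

Lemma gaussE i j : ts T i j = \sum_(p < 3) Ser (Fmat f i p) * Ser (k p) * Ser (Emat e p j).
Proof.
case: hG => _ _ _ h; apply: serP => n; rewrite /ts /= h sc_sum; apply: eq_bigr => p _.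
by [].
Qed.

Lemma o0 : (ord0 : 'I_3) = im1. Proof. exact: val_inj. Qed.
Lemma o1 : (lift ord0 ord0 : 'I_3) = i0. Proof. exact: val_inj. Qed.
Lemma o2 : (lift ord0 (lift ord0 ord0) : 'I_3) = ip1. Proof. exact: val_inj. Qed.

Ltac gsimp := rewrite gaussE !big_ord_recl big_ord0 /Fmat /Emat /=;
  rewrite ?Ser_one ?Ser_zero ?o2 ?o1 ?o0 ?mul1r ?mulr1 ?mul0r ?mulr0 ?addr0 ?add0r.

Lemma G1 : ts T im1 im1 = Ser (k im1).
Proof. gsimp. reflexivity. Qed.
Lemma G2 : ts T im1 i0 = Ser (k im1) * Ser (e im1 i0).
Proof. gsimp. reflexivity. Qed.
Lemma G3 : ts T i0 im1 = Ser (f i0 im1) * Ser (k im1).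
Proof. gsimp. reflexivity. Qed.
Lemma G4 : ts T i0 i0 = Ser (f i0 im1) * Ser (k im1) * Ser (e im1 i0) + Ser (k i0).
Proof. gsimp. reflexivity. Qed.

Lemma U4 : U (ts T i0 i0) = U (Ser (f i0 im1)) * U (Ser (k im1)) * U (Ser (e im1 i0)) + U (Ser (k i0)).
Proof. by rewrite G4 -!UM; exact: UD. Qed.
Lemma V4 : V (ts T i0 i0) = V (Ser (f i0 im1)) * V (Ser (k im1)) * V (Ser (e im1 i0)) + V (Ser (k i0)).
Proof. by rewrite G4 -!VM; exact: VD. Qed.

Lemma main_S (hT : YR_so3_rel T) (kinv : nat -> A)
  (hk1 : forall n, ser_mul kinv (k im1) n = ser_one A n)
  (hk2 : forall n, ser_mul (k im1) kinv n = ser_one A n) :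
  (yy - xx) * (U (Ser (e im1 i0)) * V (Ser (f i0 im1)) - V (Ser (f i0 im1)) * U (Ser (e im1 i0)))
  = xx * yy * (U (Ser kinv * Ser (k i0)) - V (Ser kinv * Ser (k i0))).
Proof.
have hi1 : Ser kinv * Ser (k im1) = 1 by apply: serP => n; exact: hk1 n.
have hi2 : Ser (k im1) * Ser kinv = 1 by apply: serP => n; exact: hk2 n.
have cD : forall z : ser (ser A), (yy - xx) * z = z * (yy - xx).
  by move=> z; rewrite mulrBl mulrBr xxC yyC.
have cP : forall z : ser (ser A), xx * yy * z = z * (xx * yy).
  by move=> z; rewrite -mulrA yyC mulrA xxC -mulrA.
have Dcan : forall z : ser (ser A), (yy - xx) * z = 0 -> z = 0.
  move=> z h; apply: (cancelE (c := 0)).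
  by rewrite /CC !cst0 mul0r subr0 -mulrBl h.
have R1 := @rel_gen F A T hT im1 im1 im1 im1 isT isT.
rewrite G1 in R1.
have H1 : U (Ser (k im1)) * V (Ser (k im1)) = V (Ser (k im1)) * U (Ser (k im1)).
  apply/eqP; rewrite -subr_eq0; apply/eqP; apply: (cancelE (c := 1)).
  by rewrite /CC !cst1; apply: H1_alg.
have R2 := @rel_gen F A T hT im1 im1 i0 im1 isT isT.
rewrite G1 G3 UM VM in R2.
have R3 := @rel_gen F A T hT im1 im1 im1 i0 isT isT.
rewrite G1 G2 UM VM in R3.
have R3t := congr1 (@tau A) R3.
rewrite !tauM !tauB tau_xx tau_yy ?tauM !tauU !tauV in R3t.
have H3 := H3_alg (@yyC A) R3t.
have R4 := @rel_gen F A T hT im1 i0 i0 im1 isT isT.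
rewrite ?U4 ?V4 G1 G2 G3 !UM !VM in R4.
have R5 := @rel_gen F A T hT im1 im1 i0 i0 isT isT.
rewrite ?U4 ?V4 G1 G2 G3 !UM !VM in R5.
have hu1 : U (Ser kinv) * U (Ser (k im1)) = 1 by rewrite -UM hi1 U1.
have hv2 : V (Ser (k im1)) * V (Ser kinv) = 1 by rewrite -VM hi2 V1.
have C := core cD cP Dcan hu1 hv2 H1 R2 H3 R4 R5.
rewrite -UM -VM in C.
have KK := K_alg (@xxC A) C (DdE _) (esym (VB _ _)).
move/eqP: (Klemma KK); rewrite subr_eq0 => /eqP hg.
by rewrite -hg in C.
Qed.
End Final.
Unset Implicit Arguments.

Theorem proposition3p3
    (F : fieldType) (hF : [pchar F] =i pred0) (A : algType F)
    (T : 'I_3 -> 'I_3 -> nat -> A) (hT : YR_so3_rel T)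
    (k : 'I_3 -> nat -> A) (e f : 'I_3 -> 'I_3 -> nat -> A)
    (hG : gauss_decomp T k e f)
    (kinv : nat -> A)
    (hkinv : (forall n, ser_mul kinv (k im1) n = ser_one A n) /\
             (forall n, ser_mul (k im1) kinv n = ser_one A n)) :
  let g := ser_mul kinv (k i0) in
  forall a b : int,
    mul_umv (ser2 (fun m n => e im1 i0 m * f i0 im1 n - f i0 im1 n * e im1 i0 m)) a b
    = lift_u g a b - lift_v g a b.
Proof.
move=> g a b; case: hkinv => hk1 hk2.
have M := main_S hG hT hk1 hk2.
have E1 : ser2 (fun m n => e im1 i0 m * f i0 im1 n - f i0 im1 n * e im1 i0 m) =
   emb 0 (U (Ser (e im1 i0)) * V (Ser (f i0 im1)) - V (Ser (f i0 im1)) * U (Ser (e im1 i0))).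
  by apply: ser2_emb => i j; rewrite coefB coefUV coefVU.
have E2 : lift_u g = emb 0 (U (Ser kinv * Ser (k i0))).
  by apply: ser2_emb => i j; rewrite coefU.
have E3 : lift_v g = emb 0 (V (Ser kinv * Ser (k i0))).
  by apply: ser2_emb => i j; rewrite coefV.
rewrite E1 E2 E3 emb_umv_pt -emb_B (emb_shift 0) -mulrBl M -mulrA.
by [].
Qed.
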